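(* Let $c,d\in\mathbb{R}^n$ be distinct nonzero vectors with $c^Td\le0$. Set $e=c-d$, $\beta=c^Te$, and $$d_+=d-(c^Td)\Big(\frac{e}{\beta}-\frac{c}{\|c\|\sqrt{\beta}}\Big),\qquad c_+=c-(c^Tc)\Big(\frac{e}{\beta}-\frac{c}{\|c\|\sqrt{\beta}}\Big).$$ Then $\gamma[c_+,d_+]\ge\gamma[c,d]+(\gamma[c,d])^3$.
   Context: For distinct vectors $c,d\in\mathbb{R}^n$, $\gamma[c,d]=\frac{\sqrt{\|c\|^2\|d\|^2-(c^Td)^2}}{\|c-d\|^2}$ (symmetric in $c,d$). Note $\beta=\|c\|^2-c^Td>0$ under the hypotheses. *)

(* Defs.v *)
From HB Require Import structures.
From mathcomp Require Import all_boot all_order all_algebra.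
Set Implicit Arguments. Unset Strict Implicit. Unset Printing Implicit Defensive.
Import Order.TTheory GRing.Theory Num.Theory.
Local Open Scope ring_scope.

Definition dotv (R : rcfType) (n : nat) (u v : 'rV[R]_n) : R := (u *m v^T) 0 0.

Definition normv (R : rcfType) (n : nat) (u : 'rV[R]_n) : R := Num.sqrt (dotv u u).

Definition gammav (R : rcfType) (n : nat) (c d : 'rV[R]_n) : R :=
  Num.sqrt (normv c ^+ 2 * normv d ^+ 2 - dotv c d ^+ 2) / normv (c - d) ^+ 2.

(* Main.v *)
Require Import Defs.
From HB Require Import structures.
From mathcomp Require Import all_boot all_order all_algebra.
From mathcomp Require Import ring lra.
Import Order.TTheory GRing.Theory Num.Theory.
Local Open Scope ring_scope.

Lemma poly_ineq (R : rcfType) (s t E : R) : 0 < s -> s <= t -> t^+4 <= s^+2 * E ->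
  0 <= s * E^+3 - t^+3 * E^+2 - t^+3 * (s^+2 * E - t^+4).
Proof.
move=> s0 st hE.
set h := s^+2 * E - t^+4.
have h0 : 0 <= h by rewrite subr_ge0.
have id : s^+5 * (s * E^+3 - t^+3 * E^+2 - t^+3 * (s^+2 * E - t^+4)) =
  t^+11 * (t - s) + (3*t^+8 - 2*s*t^+7 - s^+5*t^+3)*h + (3*t^+4 - s*t^+3)*h^+2 + h^+3.
  rewrite /h; ring.
have t0 : 0 < t by apply: lt_le_trans st.
have st4 : s^+4 <= t^+4 by rewrite lerXn2r // ?nnegrE ltW.
have st1 : s * t^+4 <= t^+5.
  rewrite -subr_ge0 (_ : t^+5 - s * t^+4 = (t - s) * t^+4); last by ring.
  by apply: mulr_ge0; [rewrite subr_ge0 | exact: exprn_ge0 (ltW t0)].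
have st5 : s^+5 <= s * t^+4.
  rewrite -subr_ge0 (_ : s * t^+4 - s^+5 = s * (t^+4 - s^+4)); last by ring.
  by apply: mulr_ge0; [exact: ltW | rewrite subr_ge0].
have c1 : 0 <= 3*t^+8 - 2*s*t^+7 - s^+5*t^+3.
  have -> : 3*t^+8 - 2*s*t^+7 - s^+5*t^+3 = t^+3 * (3 * t^+5 - 2 * (s * t^+4) - s^+5) by ring.
  apply: mulr_ge0; first by rewrite exprn_ge0 // ltW.
  lra.
have c2 : 0 <= 3*t^+4 - s*t^+3.
  have -> : 3*t^+4 - s*t^+3 = t^+3 * (3 * t - s) by ring.
  apply: mulr_ge0; first by rewrite exprn_ge0 // ltW.
  lra.
have : 0 <= s^+5 * (s * E^+3 - t^+3 * E^+2 - t^+3 * (s^+2 * E - t^+4)).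
  rewrite id; apply: addr_ge0; last by rewrite exprn_ge0.
  apply: addr_ge0; last by apply: mulr_ge0 => //; rewrite exprn_ge0.
  apply: addr_ge0; last by apply: mulr_ge0.
  apply: mulr_ge0; first by rewrite exprn_ge0 // ltW.
  by rewrite subr_ge0.
by rewrite pmulr_rge0 // exprn_gt0.
Qed.

Lemma final_ineq (R : rcfType) (s t E G : R) : 0 < s -> s <= t -> G = s^+2 * E - t^+4 ->
  Num.sqrt G / E + (Num.sqrt G / E)^+3 <= Num.sqrt (s^+2 / t^+2 * G) / t^+2.
Proof.
move=> s0 st hG.
have t0 : 0 < t by apply: lt_le_trans st.
have [Gn|Gp] := ltP G 0.
  have -> : Num.sqrt G = 0 by apply/eqP; rewrite sqrtr_eq0 ltW.
  have -> : Num.sqrt (s^+2 / t^+2 * G) = 0.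
    apply/eqP; rewrite sqrtr_eq0 pmulr_rle0 ?ltW //.
    by rewrite divr_gt0 // exprn_gt0.
  by rewrite !mul0r expr0n /= addr0.
have hE : t^+4 <= s^+2 * E by rewrite -subr_ge0 -hG.
have E0 : 0 < E.
  have : 0 < s^+2 * E by apply: lt_le_trans hE; rewrite exprn_gt0.
  by rewrite pmulr_rgt0 // exprn_gt0.
set g := Num.sqrt G.
have g0 : 0 <= g by rewrite sqrtr_ge0.
have g2 : g^+2 = G by rewrite sqr_sqrtr.
have -> : Num.sqrt (s^+2 / t^+2 * G) = s / t * g.
  rewrite sqrtrM; last by rewrite divr_ge0 // exprn_ge0 // ltW.
  by rewrite -expr_div_n sqrtr_sqr ger0_norm // divr_ge0 // ltW.
have P := @poly_ineq R s t E s0 st hE.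
rewrite -subr_ge0.
have -> : s / t * g / t^+2 - (g / E + (g / E)^+3) =
   g * (s * E^+3 - t^+3 * E^+2 - t^+3 * (s^+2 * E - t^+4)) / (t^+3 * E^+3).
  rewrite -hG -g2; field.
  by rewrite lt0r_neq0 // ?E0 // (lt0r_neq0 t0).
apply: divr_ge0; first exact: mulr_ge0.
by apply: mulr_ge0; rewrite exprn_ge0 // ltW.
Qed.

Section Dot.
Variables (R : rcfType) (n : nat).
Implicit Types (u v z : 'rV[R]_n) (x : R).

Lemma dotvE u v : dotv u v = \sum_j u 0 j * v 0 j.
Proof. by rewrite /dotv !mxE; apply: eq_bigr => j _; rewrite !mxE. Qed.

Lemma dotvC u v : dotv u v = dotv v u.
Proof. by rewrite !dotvE; apply: eq_bigr => j _; rewrite mulrC. Qed.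

Lemma dotvDl u v z : dotv (u + v) z = dotv u z + dotv v z.
Proof. by rewrite !dotvE -big_split; apply: eq_bigr => j _; rewrite !mxE mulrDl. Qed.

Lemma dotvBl u v z : dotv (u - v) z = dotv u z - dotv v z.
Proof. by rewrite !dotvE -sumrB; apply: eq_bigr => j _; rewrite !mxE mulrBl. Qed.

Lemma dotvZl x u z : dotv (x *: u) z = x * dotv u z.
Proof. by rewrite !dotvE mulr_sumr; apply: eq_bigr => j _; rewrite !mxE mulrA. Qed.

Lemma dotvBr u v z : dotv z (u - v) = dotv z u - dotv z v.
Proof. by rewrite dotvC dotvBl !(dotvC z). Qed.

Lemma dotvZr x u z : dotv z (x *: u) = x * dotv z u.
Proof. by rewrite dotvC dotvZl dotvC. Qed.

Lemma dotv_ge0 u : 0 <= dotv u u.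
Proof. by rewrite dotvE; apply: sumr_ge0 => j _; rewrite -expr2 sqr_ge0. Qed.

Lemma dotv_gt0 u : u != 0 -> 0 < dotv u u.
Proof.
move=> hu; rewrite lt_def dotv_ge0 andbT; apply/negP => /eqP h.
move/negP: hu; apply; apply/eqP/rowP => j; rewrite mxE.
have := h; rewrite dotvE => /eqP; rewrite psumr_eq0 => [/allP H|i _]; last by rewrite -expr2 sqr_ge0.
have := H j (mem_index_enum j); by rewrite mulf_eq0 orbb => /eqP.
Qed.
End Dot.
Arguments dotvC {R n}.
Arguments dotv_gt0 {R n}.
Arguments dotv_ge0 {R n}.

Lemma main_aux (R : rcfType) (n : nat) (c d e w dplus cplus : 'rV[R]_n) (beta : R) :
  c != 0 -> d != 0 -> c != d -> dotv c d <= 0 ->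
  e = c - d -> beta = dotv c e ->
  w = beta^-1 *: e - (normv c * Num.sqrt beta)^-1 *: c ->
  dplus = d - dotv c d *: w ->
  cplus = c - dotv c c *: w ->
  gammav c d + gammav c d ^+ 3 <= gammav cplus dplus.
Proof.
move=> hc hd hcd hb He Hbeta Hw Hdplus Hcplus.
have a0 : 0 < dotv c c by apply: dotv_gt0.
have hbeta : beta = dotv c c - dotv c d by rewrite Hbeta He dotvBr.
have beta0 : 0 < beta by rewrite hbeta; lra.
have s0 : 0 < normv c by rewrite sqrtr_gt0.
have s2 : normv c ^+ 2 = dotv c c by rewrite sqr_sqrtr // ltW.
have t0 : 0 < Num.sqrt beta by rewrite sqrtr_gt0.
have t2 : Num.sqrt beta ^+ 2 = beta by rewrite sqr_sqrtr // ltW.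
have st : normv c <= Num.sqrt beta by rewrite ler_sqrt //; lra.
have hE : dotv (c - d) (c - d) = dotv c c - 2 * dotv c d + dotv d d.
  by rewrite !(dotvBl, dotvBr) (dotvC d c); ring.
set E := dotv (c - d) (c - d) in hE *.
set s := normv c in s0 s2 st Hw *. set t := Num.sqrt beta in t0 t2 st Hw *.
have hb' : dotv c d = s^+2 - t^+2 by rewrite s2 t2 hbeta; ring.
have sn0 : s != 0 by rewrite lt0r_neq0.
have tn0 : t != 0 by rewrite lt0r_neq0.
have hdd : dotv d d = E - s^+2 + 2 * (s^+2 - t^+2) by rewrite hE -s2 hb'; ring.
have hdiff : dotv (cplus - dplus) (cplus - dplus) = t^+2.
  rewrite Hcplus Hdplus Hw He !(dotvBl, dotvBr, dotvZl, dotvZr) (dotvC d c).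
  rewrite hdd hb' -s2 -t2; field; by apply/andP.
have hG : dotv cplus cplus * dotv dplus dplus - dotv cplus dplus ^+ 2
     = s^+2 / t^+2 * (s^+2 * E - t^+4).
  rewrite Hcplus Hdplus Hw He !(dotvBl, dotvBr, dotvZl, dotvZr) (dotvC d c).
  rewrite hdd hb' -s2 -t2; field; by apply/andP.
have hG0 : normv c ^+ 2 * normv d ^+ 2 - dotv c d ^+ 2 = s^+2 * E - t^+4.
  rewrite s2 /normv sqr_sqrtr ?dotv_ge0 // hdd hb' -s2; ring.
rewrite /gammav hG0 /normv !sqr_sqrtr ?dotv_ge0 // hdiff -/E.
rewrite hG.
rewrite -s2; exact: final_ineq.
Qed.

Theorem mainTheorem9 (R : rcfType) (n : nat) (c d : 'rV[R]_n) :
  c != 0 -> d != 0 -> c != d -> dotv c d <= 0 ->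
  let e := c - d in
  let beta := dotv c e in
  let w := beta^-1 *: e - (normv c * Num.sqrt beta)^-1 *: c in
  let dplus := d - dotv c d *: w in
  let cplus := c - dotv c c *: w in
  gammav cplus dplus >= gammav c d + gammav c d ^+ 3.
Proof.
move=> hc hd hcd hb; cbv zeta.
eapply main_aux; try eassumption; reflexivity.
Qed.
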